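(* Let $(a_0,\ldots,a_n)$ be a finite sequence of positive integers. For every $\varepsilon>0$ there is $m_0>0$ such that for every integer $m\ge m_0$ and every positive integer $N$, $$\Phi(\beta^{N+1})-\Phi(\beta^N)<\varepsilon.$$
   Context: For positive integers $d_0,d_1,\ldots$, $[d_0,d_1,d_2,\ldots]$ denotes the continued fraction $\cfrac{1}{d_0+\cfrac{1}{d_1+\cfrac{1}{d_2+\cdots}}}$, and for $\beta=[d_0,d_1,\ldots]$ we write $\alpha_j(\beta)=[d_j,d_{j+1},\ldots]$. $\Phi(\beta)=\sum_{k\ge 0}\alpha_0(\beta)\cdots\alpha_{k-1}(\beta)\log\frac{1}{\alpha_k(\beta)}$ is the Yoccoz Brjuno function. For integers $m\ge1$, $N\ge1$, $\beta^N$ is the number whose digits (indexed from $0$) are $a_0,\ldots,a_n$ in positions $0,\ldots,n$, $N$ in position $n+m$, and $1$ in all other positions. *)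

(* Defs.v *)
From Stdlib Require Import Reals.
From Coquelicot Require Import Coquelicot.
Open Scope R_scope.

(* A digit sequence d : nat -> nat (entries intended positive).
   cf_trunc d k = [d_0, ..., d_{k-1}] (the k-th convergent, with cf_trunc d 0 = 0). *)
Fixpoint cf_trunc (d : nat -> nat) (k : nat) : R :=
  match k with
  | O => 0
  | S k' => / (INR (d O) + cf_trunc (fun i => d (S i)) k')
  end.

Definition cf (d : nat -> nat) : R := real (Lim_seq (fun k => cf_trunc d k)).

Definition alpha (d : nat -> nat) (j : nat) : R := cf (fun i => d (i + j)%nat).

Fixpoint alpha_prod (d : nat -> nat) (k : nat) : R :=
  match k with
  | O => 1
  | S k' => alpha_prod d k' * alpha d k'
  end.

(* Yoccoz Brjuno function, as a function of the digit sequence of beta: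
   Phi(beta) = sum_{k>=0} alpha_0 ... alpha_{k-1} log (1/alpha_k). *)
Definition Phi (d : nat -> nat) : R :=
  Series (fun k => alpha_prod d k * ln (/ alpha d k)).

(* Digits of beta^N: a_0..a_n in positions 0..n, N in position n+m, 1 elsewhere. *)
Definition beta_digits (a : nat -> nat) (n m N : nat) : nat -> nat :=
  fun i => if Nat.leb i n then a i
           else if Nat.eqb i (n + m) then N else 1%nat.

(* Main.v *)
Require Import Defs.
From Stdlib Require Import Reals Lra Lia.
From Coquelicot Require Import Coquelicot.
Open Scope R_scope.

Definition gold : R := (sqrt 5 - 1) / 2.

Lemma gold_eq : gold * gold + gold = 1.
Proof.
  unfold gold. assert (H := sqrt_sqrt 5 ltac:(lra)).
  nra.
Qed.

Lemma gold_bounds : 1/2 < gold < 1.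
Proof.
  unfold gold. assert (H := sqrt_sqrt 5 ltac:(lra)).
  assert (0 <= sqrt 5) by apply sqrt_pos. nra.
Qed.

Lemma gold_inv : gold = / (1 + gold).
Proof.
  pose proof gold_eq. pose proof gold_bounds.
  field_simplify_eq; lra.
Qed.

Lemma cf_trunc_ext d d' k : (forall i, d i = d' i) -> cf_trunc d k = cf_trunc d' k.
Proof.
  revert d d'; induction k as [|k IH]; intros d d' H; simpl; auto.
  rewrite H. f_equal. f_equal. apply IH. intros; apply H.
Qed.

Lemma cf_ext d d' : (forall i, d i = d' i) -> cf d = cf d'.
Proof.
  intros H; unfold cf. f_equal. apply Lim_seq_ext. intros; apply cf_trunc_ext; auto.
Qed.

Lemma ones_trunc_nonneg k : 0 <= cf_trunc (fun _ => 1%nat) k.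
Proof.
  induction k; simpl. lra. apply Rlt_le, Rinv_0_lt_compat. lra.
Qed.

Lemma ones_trunc_err k : Rabs (cf_trunc (fun _ => 1%nat) k - gold) <= gold ^ S k.
Proof.
  pose proof gold_bounds as Hg.
  induction k as [|k IH].
  - simpl. rewrite Rabs_left1; lra.
  - change (cf_trunc (fun _ => 1%nat) (S k)) with (/ (1 + cf_trunc (fun _ => 1%nat) k)).
    pose proof (ones_trunc_nonneg k) as Hc.
    set (c := cf_trunc (fun _ => 1%nat) k) in *.
    assert (E : / (1 + c) - gold = (gold - c) * gold / (1 + c)).
    { rewrite gold_inv at 1. rewrite gold_inv at 3. field. lra. }
    rewrite E. unfold Rdiv. rewrite !Rabs_mult.
    rewrite (Rabs_right gold) by lra. rewrite Rabs_inv, (Rabs_right (1+c)) by lra.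
    rewrite Rabs_minus_sym.
    simpl. simpl in IH.
    assert (/ (1 + c) <= 1). { rewrite <- Rinv_1. apply Rinv_le_contravar; lra. }
    assert (0 <= Rabs (c - gold)) by apply Rabs_pos.
    assert (0 < / (1+c)) by (apply Rinv_0_lt_compat; lra).
    assert (Rabs (c - gold) * gold * / (1 + c) <= Rabs (c - gold) * gold).
    { assert (0 <= Rabs (c - gold) * gold) by nra. nra. }
    assert (Rabs (c - gold) * gold <= gold * (gold * gold ^ k)) by nra.
    lra.
Qed.

Lemma ones_lim : is_lim_seq (cf_trunc (fun _ => 1%nat)) gold.
Proof.
  pose proof gold_bounds as Hg.
  apply is_lim_seq_le_le with (u := fun k => gold - gold * gold ^ k) (w := fun k => gold + gold * gold ^ k).
  - intros k. pose proof (ones_trunc_err k) as H. simpl in H.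
    apply Rabs_le_between' in H. lra.
  - replace (Finite gold) with (Finite (gold - gold * 0)) by (f_equal; ring).
    apply is_lim_seq_minus'. apply is_lim_seq_const.
    apply is_lim_seq_mult'. apply is_lim_seq_const. apply is_lim_seq_geom. rewrite Rabs_right; lra.
  - replace (Finite gold) with (Finite (gold + gold * 0)) by (f_equal; ring).
    apply is_lim_seq_plus'. apply is_lim_seq_const.
    apply is_lim_seq_mult'. apply is_lim_seq_const. apply is_lim_seq_geom. rewrite Rabs_right; lra.
Qed.

Lemma cf_cons d (L : R) : is_lim_seq (cf_trunc (fun i => d (S i))) L -> 0 < INR (d 0%nat) + L ->
  is_lim_seq (cf_trunc d) (/ (INR (d 0%nat) + L)).
Proof.
  intros H HL. apply is_lim_seq_incr_1. simpl.
  change (Finite (/ (INR (d 0%nat) + L))) with (Rbar_inv (INR (d 0%nat) + L)).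
  apply is_lim_seq_inv. apply is_lim_seq_plus'. apply is_lim_seq_const. exact H.
  intro E. injection E. lra.
Qed.

Lemma cf_of_lim d (L : R) : is_lim_seq (cf_trunc d) L -> cf d = L.
Proof. intros H. unfold cf. replace (Lim_seq (fun k => cf_trunc d k)) with (Finite L). reflexivity. symmetry. apply is_lim_seq_unique. exact H. Qed.

Lemma alpha_facts d P : (forall i, (1 <= d i)%nat) -> (forall i, (P < i)%nat -> d i = 1%nat) ->
  forall j, is_lim_seq (cf_trunc (fun i => d (i + j)%nat)) (alpha d j) /\ 0 < alpha d j <= 1.
Proof.
  intros H1 HP.
  assert (K : forall k j, (P < j + k)%nat ->
     is_lim_seq (cf_trunc (fun i => d (i + j)%nat)) (alpha d j) /\ 0 < alpha d j <= 1).
  { induction k as [|k IH]; intros j Hj.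
    - assert (E : forall i, d (i + j)%nat = 1%nat) by (intros; apply HP; lia).
      assert (Hl : is_lim_seq (cf_trunc (fun i => d (i + j)%nat)) gold).
      { eapply is_lim_seq_ext. 2: exact ones_lim. intros; symmetry; apply cf_trunc_ext; auto. }
      unfold alpha. rewrite (cf_of_lim _ _ Hl). split; auto. pose proof gold_bounds; lra.
    - destruct (Nat.lt_ge_cases P (j + k)) as [Hlt|Hge]. { apply IH; auto. }
      destruct (IH (S j) ltac:(lia)) as [Hl [Ha1 Ha2]].
      assert (Hl' : is_lim_seq (cf_trunc (fun i => d (S i + j)%nat)) (alpha d (S j))).
      { eapply is_lim_seq_ext. 2: exact Hl. intros; apply cf_trunc_ext. intros; f_equal; lia. }
      assert (Hd : 1 <= INR (d (0 + j)%nat)) by (apply (le_INR 1); auto).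
      pose proof (cf_cons (fun i => d (i + j)%nat) _ Hl' ltac:(lra)) as Hc.
      assert (Ea : alpha d j = / (INR ((fun i : nat => d (i + j)%nat) 0%nat) + alpha d (S j))).
      { unfold alpha at 1. rewrite (cf_of_lim _ _ Hc). reflexivity. }
      rewrite Ea. split; [exact Hc|]. simpl in Hd |- *.
      split. apply Rinv_0_lt_compat; lra.
      rewrite <- Rinv_1. apply Rinv_le_contravar; lra. }
  intros j. apply (K (S P) j). lia.
Qed.

Lemma alpha_rec d P : (forall i, (1 <= d i)%nat) -> (forall i, (P < i)%nat -> d i = 1%nat) ->
  forall j, alpha d j = / (INR (d j) + alpha d (S j)).
Proof.
  intros H1 HP j.
  destruct (alpha_facts d P H1 HP (S j)) as [Hl [Ha1 Ha2]].
  assert (Hl' : is_lim_seq (cf_trunc (fun i => d (S i + j)%nat)) (alpha d (S j))).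
  { eapply is_lim_seq_ext. 2: exact Hl. intros; apply cf_trunc_ext. intros; f_equal; lia. }
  assert (Hd : 1 <= INR (d (0 + j)%nat)) by (apply (le_INR 1); auto).
  pose proof (cf_cons (fun i => d (i + j)%nat) _ Hl' ltac:(lra)) as Hc.
  unfold alpha at 1. rewrite (cf_of_lim _ _ Hc). reflexivity.
Qed.

Lemma alpha_tail d P : (forall i, (P < i)%nat -> d i = 1%nat) ->
  forall j, (P < j)%nat -> alpha d j = gold.
Proof.
  intros HP j Hj. unfold alpha. apply cf_of_lim.
  eapply is_lim_seq_ext. 2: exact ones_lim. intros; symmetry; apply cf_trunc_ext; intros; apply HP; lia.
Qed.

Lemma alpha_ext d d' : (forall i, d i = d' i) -> forall j, alpha d j = alpha d' j.
Proof. intros H j. unfold alpha. apply cf_ext. intros; apply H. Qed.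

Lemma alpha_prod_ext d d' : (forall i, d i = d' i) -> forall k, alpha_prod d k = alpha_prod d' k.
Proof. intros H k; induction k; simpl; auto. rewrite IHk, (alpha_ext d d' H). auto. Qed.

Definition phit (d : nat -> nat) (k : nat) : R := alpha_prod d k * ln (/ alpha d k).

Lemma Phi_ext d d' : (forall i, d i = d' i) -> Phi d = Phi d'.
Proof.
  intros H. unfold Phi. apply Series_ext. intros k. rewrite (alpha_prod_ext d d' H), (alpha_ext d d' H). auto.
Qed.

Lemma alpha_S d k : alpha (fun i => d (S i)) k = alpha d (S k).
Proof. unfold alpha. apply cf_ext. intros; f_equal; lia. Qed.

Lemma alpha_prod_S d k : alpha_prod d (S k) = alpha d 0 * alpha_prod (fun i => d (S i)) k.
Proof.
  induction k as [|k IH].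
  - simpl. ring.
  - change (alpha_prod d (S (S k))) with (alpha_prod d (S k) * alpha d (S k)).
    rewrite IH. simpl. rewrite alpha_S. ring.
Qed.

Lemma phit_S d k : phit d (S k) = alpha d 0 * phit (fun i => d (S i)) k.
Proof. unfold phit. rewrite alpha_prod_S, alpha_S. ring. Qed.

Lemma Phi_rec d : ex_series (phit (fun i => d (S i))) ->
  ex_series (phit d) /\ Phi d = ln (/ alpha d 0) + alpha d 0 * Phi (fun i => d (S i)).
Proof.
  intros H.
  assert (H' : ex_series (fun k => phit d (S k))).
  { destruct H as [l Hl]. exists (l * alpha d 0).
    apply (is_series_ext (fun k => phit (fun i => d (S i)) k * alpha d 0)).
    intros k. rewrite phit_S. apply Rmult_comm.
    apply is_series_scal_r. exact Hl. }
  assert (He : ex_series (phit d)) by (apply ex_series_incr_1; exact H').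
  split; auto.
  unfold Phi. change (Series (phit d) = ln (/ alpha d 0) + alpha d 0 * Series (phit (fun i => d (S i)))).
  rewrite Series_incr_1 by exact He.
  rewrite <- Series_scal_l. unfold phit at 1. simpl. rewrite Rmult_1_l. f_equal.
  apply Series_ext. intros k. apply phit_S.
Qed.

Lemma alpha_ones d : (forall i, d i = 1%nat) -> forall j, alpha d j = gold.
Proof.
  intros H j. unfold alpha. apply cf_of_lim.
  eapply is_lim_seq_ext. 2: exact ones_lim. intros; symmetry; apply cf_trunc_ext; intros; apply H.
Qed.

Lemma phit_ones d : (forall i, d i = 1%nat) -> forall k, phit d k = gold ^ k * ln (/ gold).
Proof.
  intros H k. unfold phit. rewrite (alpha_ones d H). f_equal.
  induction k; simpl; auto. rewrite IHk, (alpha_ones d H). ring.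
Qed.

Definition Cg : R := / (1 - gold) * ln (/ gold).

Lemma series_ones d : (forall i, d i = 1%nat) -> ex_series (phit d) /\ Phi d = Cg.
Proof.
  intros H. pose proof gold_bounds.
  assert (Hs : is_series (phit d) Cg).
  { apply (is_series_ext (fun k => gold ^ k * ln (/ gold))).
    intros; symmetry; apply phit_ones; auto.
    apply is_series_scal_r. apply is_series_geom. rewrite Rabs_right; lra. }
  split. exists Cg; exact Hs.
  unfold Phi. change (Series (phit d) = Cg). apply is_series_unique; exact Hs.
Qed.

Lemma phit_ext d d' : (forall i, d i = d' i) -> forall k, phit d k = phit d' k.
Proof. intros H k. unfold phit. rewrite (alpha_prod_ext d d' H), (alpha_ext d d' H). auto. Qed.

Lemma shift_ex_series d P : (forall i, (P < i)%nat -> d i = 1%nat) ->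
  forall j, ex_series (phit (fun i => d (i + j)%nat)).
Proof.
  intros HP.
  assert (K : forall k j, (P < j + k)%nat -> ex_series (phit (fun i => d (i + j)%nat))).
  { induction k as [|k IH]; intros j Hj.
    - apply (series_ones (fun i => d (i + j)%nat)). intros; apply HP; lia.
    - destruct (Nat.lt_ge_cases P (j + k)) as [Hlt|Hge]. { apply IH; auto. }
      apply (Phi_rec (fun i => d (i + j)%nat)).
      apply (ex_series_ext (phit (fun i => d (i + S j)%nat))).
      intros; apply phit_ext; intros; f_equal; lia.
      apply IH; lia. }
  intros j; apply (K (S P)); lia.
Qed.

Lemma Phi_shift_rec d P : (forall i, (P < i)%nat -> d i = 1%nat) ->
  forall j, Phi (fun i => d (i + j)%nat) = ln (/ alpha d j) + alpha d j * Phi (fun i => d (i + S j)%nat).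
Proof.
  intros HP j.
  destruct (Phi_rec (fun i => d (i + j)%nat)) as [_ E].
  { apply (ex_series_ext (phit (fun i => d (i + S j)%nat))).
    intros; apply phit_ext; intros; f_equal; lia. apply (shift_ex_series d P HP). }
  rewrite E.
  replace (alpha (fun i => d (i + j)%nat) 0) with (alpha d j).
  2:{ unfold alpha. apply cf_ext. intros; f_equal; lia. }
  f_equal. f_equal. apply Phi_ext. intros; f_equal; lia.
Qed.

Lemma Phi_shift_tail d P : (forall i, (P < i)%nat -> d i = 1%nat) ->
  forall j, (P < j)%nat -> Phi (fun i => d (i + j)%nat) = Cg.
Proof.
  intros HP j Hj. apply (series_ones (fun i => d (i + j)%nat)). intros; apply HP; lia.
Qed.

Lemma ln_le_sub1 z : 0 < z -> ln z <= z - 1.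
Proof.
  intros Hz. destruct (Req_dec z 1) as [E|E].
  - subst; rewrite ln_1; lra.
  - assert (ln z <> 0). { intro H0. apply E. apply ln_inv; auto. lra. rewrite H0, ln_1; auto. }
    pose proof (exp_ineq1 _ H) as H1. rewrite exp_ln in H1 by auto. lra.
Qed.

Lemma ln_diff1 s x y : 0 < s -> s <= x -> s <= y -> ln x - ln y <= Rabs (x - y) / s.
Proof.
  intros Hs Hx Hy.
  assert (E : ln x = ln (x / y) + ln y).
  { rewrite <- ln_mult. f_equal. field. lra. apply Rdiv_lt_0_compat; lra. lra. }
  assert (H1 := ln_le_sub1 (x / y) ltac:(apply Rdiv_lt_0_compat; lra)).
  assert (E2 : x / y - 1 = (x - y) * / y) by (field; lra).
  assert (H2 : / y <= / s) by (apply Rinv_le_contravar; lra).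
  assert (H3 : 0 < / y) by (apply Rinv_0_lt_compat; lra).
  assert (H4 : (x - y) <= Rabs (x - y)) by apply RRle_abs.
  assert (H5 : 0 <= Rabs (x - y)) by apply Rabs_pos.
  unfold Rdiv. nra.
Qed.

Lemma ln_diff s x y : 0 < s -> s <= x -> s <= y -> Rabs (ln x - ln y) <= Rabs (x - y) / s.
Proof.
  intros Hs Hx Hy. apply Rabs_le. split.
  - pose proof (ln_diff1 s y x Hs Hy Hx). rewrite Rabs_minus_sym in H. lra.
  - apply ln_diff1; auto.
Qed.

Lemma step_D x y B1 B1' s : 0 < s -> s <= x -> s <= y ->
  Rabs ((ln (/ y) + y * B1') - (ln (/ x) + x * B1))
  <= Rabs (x - y) / s + Rabs (x - y) * Rabs B1 + y * Rabs (B1' - B1).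
Proof.
  intros Hs Hx Hy.
  rewrite !ln_Rinv by lra.
  replace (- ln y + y * B1' - (- ln x + x * B1)) with ((ln x - ln y) + ((y - x) * B1 + y * (B1' - B1))) by ring.
  eapply Rle_trans. apply Rabs_triang.
  eapply Rle_trans. apply Rplus_le_compat_l. apply Rabs_triang.
  rewrite !Rabs_mult. rewrite (Rabs_right y) by lra. rewrite (Rabs_minus_sym y x).
  pose proof (ln_diff s x y Hs Hx Hy). lra.
Qed.

Lemma step_B x B1 : 0 < x <= 1 -> Rabs (ln (/ x) + x * B1) <= (/ x - 1) + x * Rabs B1.
Proof.
  intros Hx.
  assert (0 <= ln (/ x)).
  { rewrite ln_Rinv by lra. assert (ln x <= ln 1). { destruct (Req_dec x 1). subst; lra. apply Rlt_le, ln_increasing; lra. } rewrite ln_1 in H. lra. }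
  assert (ln (/ x) <= / x - 1) by (apply ln_le_sub1; apply Rinv_0_lt_compat; lra).
  eapply Rle_trans. apply Rabs_triang. rewrite Rabs_mult, (Rabs_right x) by lra.
  rewrite Rabs_right by lra. lra.
Qed.

Lemma step_delta c x1 y1 : 0 < c + x1 -> 0 < c + y1 ->
  / (c + x1) - / (c + y1) = / (c + x1) * / (c + y1) * (y1 - x1).
Proof. intros. field. lra. Qed.

Lemma main_bound (n m : nat) (Nr g C A : R) (c x y B B' : nat -> R) :
  (2 <= m)%nat -> 1 <= Nr -> 1/2 < g < 1 -> 1 <= A ->
  (forall j, (j < n + m)%nat -> 1 <= c j) ->
  (forall j, (j <= n)%nat -> c j <= A) ->
  (forall j, (n < j)%nat -> (j < n + m)%nat -> c j = 1) ->
  (forall j, (j < n + m)%nat -> x j = / (c j + x (S j))) ->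
  (forall j, (j < n + m)%nat -> y j = / (c j + y (S j))) ->
  x (n + m)%nat = / (Nr + g) -> y (n + m)%nat = / (Nr + 1 + g) ->
  (forall j, 0 < x j <= 1) -> (forall j, 0 < y j <= 1) ->
  (forall j, B j = ln (/ x j) + x j * B (S j)) ->
  (forall j, B' j = ln (/ y j) + y j * B' (S j)) ->
  B (S (n + m)) = C -> B' (S (n + m)) = C ->
  Rabs (B' 0%nat - B 0%nat) <=
    (2/3) ^ (m - 2) * ((16 + 4 * Rabs C) * (1 + (INR n + 1) * (INR n + 2) * (A + 1))).
Proof.
  intros Hm HN Hg HA Hc1 HcA Hc1' Hxr Hyr Hxp Hyp Hx Hy HB HB' HBp HBp'.
  set (p := (n + m)%nat) in *.
  destruct p as [|q] eqn:Ep. { lia. }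
  assert (Hnq : (n < q)%nat) by lia.
  pose (Dl j := Rabs (x j - y j)).
  pose (Dd j := Rabs (B' j - B j)).
  assert (Dl0 : forall j, 0 <= Dl j) by (intros; apply Rabs_pos).
  assert (Dd0 : forall j, 0 <= Dd j) by (intros; apply Rabs_pos).
  assert (Hdel : forall j, (j < S q)%nat -> Dl j = x j * y j * Dl (S j)).
  { intros j Hj. unfold Dl.
    assert (E : x j - y j = x j * y j * (y (S j) - x (S j))).
    { rewrite (Hxr j Hj), (Hyr j Hj). apply step_delta.
      pose proof (Hc1 j Hj); pose proof (Hx (S j)); lra.
      pose proof (Hc1 j Hj); pose proof (Hy (S j)); lra. }
    rewrite E, !Rabs_mult, (Rabs_right (x j)), (Rabs_right (y j)), (Rabs_minus_sym (y (S j))); auto.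
    pose proof (Hy j); lra. pose proof (Hx j); lra. }
  assert (Hdle : forall j, (j < S q)%nat -> Dl j <= Dl (S j)).
  { intros j Hj. rewrite (Hdel j Hj). pose proof (Hx j); pose proof (Hy j); pose proof (Dl0 (S j)).
    assert (x j * y j <= 1) by nra. nra. }
  assert (Hlow : forall j, (j < S q)%nat -> / (c j + 1) <= x j /\ / (c j + 1) <= y j).
  { intros j Hj. pose proof (Hc1 j Hj). split.
    - rewrite (Hxr j Hj). apply Rinv_le_contravar. pose proof (Hx (S j)); lra. pose proof (Hx (S j)); lra.
    - rewrite (Hyr j Hj). apply Rinv_le_contravar. pose proof (Hy (S j)); lra. pose proof (Hy (S j)); lra. }
  assert (Hones : forall j, (n < j)%nat -> (j < S q)%nat -> 1/2 <= x j /\ 1/2 <= y j).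
  { intros j H1 H2. destruct (Hlow j H2). rewrite (Hc1' j H1 H2) in *.
    replace (/ (1 + 1)) with (1/2) in * by field. lra. }
  assert (Hones2 : forall j, (n < j)%nat -> (S (S j) <= S q)%nat -> x j <= 2/3 /\ y j <= 2/3).
  { intros j H1 H2. destruct (Hones (S j) ltac:(lia) ltac:(lia)).
    rewrite (Hxr j ltac:(lia)), (Hyr j ltac:(lia)), (Hc1' j H1 ltac:(lia)).
    split; replace (2/3) with (/ (3/2)) by field; apply Rinv_le_contravar; lra. }
  set (a := / (Nr + g)) in *. set (b := / (Nr + 1 + g)) in *.
  assert (Ha : 0 < a <= 1 /\ Nr * a <= 1).
  { unfold a. split. split. apply Rinv_0_lt_compat; lra.
    rewrite <- Rinv_1. apply Rinv_le_contravar; lra.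
    assert (0 < / (Nr + g)) by (apply Rinv_0_lt_compat; lra).
    assert ((Nr + g) * / (Nr + g) = 1) by (field; lra). nra. }
  assert (Hb : 0 < b <= 1).
  { unfold b. split. apply Rinv_0_lt_compat; lra.
    rewrite <- Rinv_1. apply Rinv_le_contravar; lra. }
  assert (Hba : b <= a). { unfold a, b. apply Rinv_le_contravar; lra. }
  assert (DlP : Dl (S q) = a * b).
  { unfold Dl. rewrite Hxp, Hyp. unfold a, b.
    replace (/ (Nr + g) - / (Nr + 1 + g)) with (/ (Nr + g) * / (Nr + 1 + g)) by (field; lra).
    apply Rabs_right. fold a b. nra. }
  assert (DlP1 : Dl (S q) <= 1 /\ Nr * Dl (S q) <= 1) by (rewrite DlP; split; nra).
  assert (BP : Rabs (B (S q)) <= Nr + Rabs C).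
  { rewrite HB, HBp. eapply Rle_trans. apply step_B. rewrite Hxp; lra.
    rewrite Hxp. replace (/ a) with (Nr + g) by (unfold a; field; lra). pose proof (Rabs_pos C). destruct Ha as [[Ha1 Ha2] Ha3]. nra. }
  assert (DdP : Dd (S q) <= 1 + Rabs C).
  { unfold Dd. rewrite (HB (S q)), (HB' (S q)), HBp, HBp'.
    eapply Rle_trans. apply (step_D _ _ _ _ (y (S q))). apply Hy. rewrite Hxp, Hyp; lra. lra.
    fold (Dl (S q)). rewrite Rminus_diag, Rabs_R0, Rmult_0_r, Rplus_0_r.
    rewrite Hyp. rewrite DlP. replace (a * b / b) with a by (field; lra).
    pose proof (Rabs_pos C). nra. }
  pose proof (Rabs_pos C) as HC0.
  destruct (Hones q Hnq ltac:(lia)) as [Hxq Hyq].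
  assert (Hxq1 := Hx q). assert (Hyq1 := Hy q).
  assert (Dlq : Dl q <= Dl (S q)) by (apply Hdle; lia).
  assert (DdQ : Dd q <= 4 + 2 * Rabs C).
  { unfold Dd. rewrite (HB q), (HB' q).
    eapply Rle_trans. apply (step_D _ _ _ _ (1/2)); lra.
    fold (Dl q). fold (Dd (S q)).
    assert (Dl q / (1/2) = 2 * Dl q) by (field). rewrite H.
    assert (Dl q * Rabs (B (S q)) <= Dl (S q) * (Nr + Rabs C)).
    { apply Rmult_le_compat; auto. apply Rabs_pos. }
    assert (y q * Dd (S q) <= Dd (S q)) by (pose proof (Dd0 (S q)); nra).
    destruct DlP1. nra. }
  set (U := 3 + Nr + Rabs C).
  assert (BQ : Rabs (B q) <= U).
  { rewrite HB. eapply Rle_trans. apply step_B. lra.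
    assert (/ x q <= 2). { replace 2 with (/ (1/2)) by field. apply Rinv_le_contravar; lra. }
    assert (x q * Rabs (B (S q)) <= Rabs (B (S q))) by (pose proof (Rabs_pos (B (S q))); nra).
    unfold U; lra. }
  set (W := 2 * (2 + U)).
  assert (PhiQ : Dd q + W * Dl q <= 16 + 4 * Rabs C).
  { unfold W, U. destruct DlP1. nra. }
  assert (ClO : forall k j, (j + k = q)%nat -> (n < j)%nat ->
     Dd j + W * Dl j <= (2/3) ^ k * (Dd q + W * Dl q) /\ Rabs (B j) <= U).
  { induction k as [|k IH]; intros j Hj Hnj.
    - replace j with q by lia. simpl. split; lra.
    - destruct (IH (S j) ltac:(lia) ltac:(lia)) as [IH1 IH2].
      destruct (Hones j Hnj ltac:(lia)) as [Hxj Hyj].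
      destruct (Hones2 j Hnj ltac:(lia)) as [Hxj2 Hyj2].
      assert (Hdj : Dl j <= 4/9 * Dl (S j)).
      { rewrite (Hdel j ltac:(lia)). pose proof (Dl0 (S j)).
        assert (x j * y j <= 4/9) by nra. nra. }
      assert (HU : 3 <= U) by (unfold U; lra).
      split.
      + assert (DdJ : Dd j <= 2 * Dl j + Dl j * U + 2/3 * Dd (S j)).
        { unfold Dd. rewrite (HB j), (HB' j).
          eapply Rle_trans. apply (step_D _ _ _ _ (1/2)); lra.
          fold (Dl j). fold (Dd (S j)).
          assert (Dl j / (1/2) = 2 * Dl j) by (field). rewrite H.
          assert (Dl j * Rabs (B (S j)) <= Dl j * U) by (apply Rmult_le_compat_l; auto).
          assert (y j * Dd (S j) <= 2/3 * Dd (S j)) by (pose proof (Dd0 (S j)); nra).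
          lra. }
        assert (Dd j + W * Dl j <= 2/3 * (Dd (S j) + W * Dl (S j))).
        { unfold W in *. pose proof (Dl0 j). pose proof (Dl0 (S j)). nra. }
        simpl. pose proof (pow_le (2/3) k ltac:(lra)). nra.
      + rewrite HB. eapply Rle_trans. apply step_B. pose proof (Hx j); lra.
        assert (/ x j <= 2). { replace 2 with (/ (1/2)) by field. apply Rinv_le_contravar; lra. }
        assert (x j * Rabs (B (S j)) <= 2/3 * U) by (pose proof (Rabs_pos (B (S j))); nra).
        lra. }
  destruct (ClO (m - 2)%nat (S n) ltac:(lia) ltac:(lia)) as [O1 O2].
  set (V := A + 1 + U + (INR n + 1) * A).
  assert (V0 : 0 <= V) by (unfold V, U; pose proof (pos_INR n); nra).
  assert (ClP : forall k j, (j + k = S n)%nat ->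
     Dd j + INR j * V * Dl j <= Dd (S n) + INR (S n) * V * Dl (S n) /\ Rabs (B j) <= U + INR k * A /\ Dl j <= Dl (S n)).
  { induction k as [|k IH]; intros j Hj.
    - assert (j = S n) by lia. subst j. change (INR 0) with 0. split; [lra|split; [lra|lra]].
    - destruct (IH (S j) ltac:(lia)) as [IH1 [IH2 IH3]].
      assert (Hjn : (j <= n)%nat) by lia.
      assert (Hjq : (j < S q)%nat) by lia.
      pose proof (Hc1 j Hjq) as Hcj1. pose proof (HcA j Hjn) as HcjA.
      destruct (Hlow j Hjq) as [Hl1 Hl2].
      assert (Hs : / (A + 1) <= / (c j + 1)) by (apply Rinv_le_contravar; lra).
      assert (Hs0 : 0 < / (A + 1)) by (apply Rinv_0_lt_compat; lra).
      assert (Hkn : INR k <= INR n) by (apply le_INR; lia).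
      assert (HBS : Rabs (B (S j)) <= U + (INR n + 1) * A) by nra.
      pose proof (Hdle j Hjq) as HdS. pose proof (Dl0 j). pose proof (Dl0 (S j)).
      pose proof (Hx j). pose proof (Hy j).
      split; [|split].
      + assert (DdJ : Dd j <= V * Dl j + Dd (S j)).
        { unfold Dd. rewrite (HB j), (HB' j).
          eapply Rle_trans. apply (step_D _ _ _ _ (/ (A + 1))); lra.
          fold (Dl j). fold (Dd (S j)).
          assert (Dl j / / (A + 1) = (A + 1) * Dl j) by (field; lra). rewrite H3.
          assert (Dl j * Rabs (B (S j)) <= Dl j * (U + (INR n + 1) * A)) by (apply Rmult_le_compat_l; auto).
          assert (y j * Dd (S j) <= Dd (S j)) by (pose proof (Dd0 (S j)); nra).
          unfold V. lra. }
        rewrite S_INR in *. pose proof (pos_INR j).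
        assert ((INR j + 1) * V * Dl j <= (INR j + 1) * V * Dl (S j)).
        { apply Rmult_le_compat_l; auto. nra. }
        assert (E1 : (INR j + 1) * V * Dl j = INR j * V * Dl j + V * Dl j) by ring. rewrite S_INR in IH1. lra.
      + rewrite HB. eapply Rle_trans. apply step_B. lra.
        assert (E : / x j = c j + x (S j)).
        { rewrite (Hxr j Hjq). rewrite Rinv_inv. auto. }
        rewrite E. pose proof (Hx (S j)).
        assert (x j * Rabs (B (S j)) <= Rabs (B (S j))) by (pose proof (Rabs_pos (B (S j))); nra).
        rewrite S_INR. nra.
      + lra. }
  destruct (ClP (S n) 0%nat ltac:(lia)) as [P1 _].
  change (INR 0) with 0 in P1. rewrite S_INR in P1.
  fold (Dd 0%nat).
  set (t := INR n) in *. assert (t0 : 0 <= t) by apply pos_INR.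
  assert (HV : V <= (t + 2) * (A + 1) * (2 + U)).
  { unfold V. assert (0 <= U) by (unfold U; lra). assert (1 <= (t+2)*(A+1)) by nra. assert (0 <= ((t+2)*(A+1) - 1) * U) by (apply Rmult_le_pos; lra). assert (0 <= t * A) by nra. nra. }
  set (Ph := Dd (S n) + W * Dl (S n)) in *.
  assert (HPh : Ph <= (2/3) ^ (m - 2) * (16 + 4 * Rabs C)).
  { pose proof (pow_le (2/3) (m-2) ltac:(lra)). nra. }
  assert (HT : (t + 1) * V * Dl (S n) <= (t + 1) * (t + 2) * (A + 1) * Ph).
  { unfold Ph, W. pose proof (Dl0 (S n)). pose proof (Dd0 (S n)).
    assert ((t+1) * V * Dl (S n) <= (t+1) * ((t + 2) * (A + 1) * (2 + U)) * Dl (S n)).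
    { apply Rmult_le_compat_r; auto. apply Rmult_le_compat_l; lra. }
    assert (HK : 0 <= (t + 1) * (t + 2) * (A + 1)) by (apply Rmult_le_pos; [nra|lra]).
    set (K := (t + 1) * (t + 2) * (A + 1)) in *.
    assert (0 <= U) by (unfold U; lra).
    assert (0 <= K * Dd (S n)) by (apply Rmult_le_pos; auto).
    assert (0 <= K * (2 + U) * Dl (S n)) by (apply Rmult_le_pos; [apply Rmult_le_pos|]; lra).
    assert (E : (t+1) * ((t + 2) * (A + 1) * (2 + U)) * Dl (S n) = K * (2 + U) * Dl (S n)) by (unfold K; ring).
    assert (E2 : K * (Dd (S n) + 2 * (2 + U) * Dl (S n)) = K * Dd (S n) + 2 * (K * (2 + U) * Dl (S n))) by ring.
    lra. }
  assert (HD : Dd (S n) <= Ph) by (unfold Ph, W; pose proof (Dl0 (S n)); assert (0 <= U) by (unfold U; lra); nra).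
  assert (0 <= (t + 1) * (t + 2) * (A + 1)) by (apply Rmult_le_pos; [nra|lra]).
  assert (Dd 0%nat <= (1 + (t + 1) * (t + 2) * (A + 1)) * Ph) by nra.
  pose proof (pow_le (2/3) (m-2) ltac:(lra)). nra.
Qed.

Lemma max_bound (a : nat -> nat) n : exists A, (1 <= A)%nat /\ forall i, (i <= n)%nat -> (a i <= A)%nat.
Proof.
  induction n as [|n [A [H1 H2]]].
  - exists (Nat.max 1 (a 0%nat)). split. lia. intros i Hi. replace i with 0%nat by lia. lia.
  - exists (Nat.max A (a (S n))). split. lia. intros i Hi.
    destruct (Nat.eq_dec i (S n)). subst; lia. specialize (H2 i ltac:(lia)). lia.
Qed.

Lemma bd_ge1 a n m N : (forall i, (i <= n)%nat -> (1 <= a i)%nat) -> (1 <= N)%nat ->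
  forall i, (1 <= beta_digits a n m N i)%nat.
Proof.
  intros ha HN i. unfold beta_digits.
  destruct (Nat.leb_spec i n). apply ha; lia.
  destruct (Nat.eqb_spec i (n + m)); lia.
Qed.

Lemma bd_tail a n m N : forall i, (n + m < i)%nat -> beta_digits a n m N i = 1%nat.
Proof.
  intros i Hi. unfold beta_digits.
  destruct (Nat.leb_spec i n). lia. destruct (Nat.eqb_spec i (n + m)); lia.
Qed.

Lemma bd_ones a n m N : forall i, (n < i)%nat -> (i < n + m)%nat -> beta_digits a n m N i = 1%nat.
Proof.
  intros i H1 H2. unfold beta_digits.
  destruct (Nat.leb_spec i n). lia. destruct (Nat.eqb_spec i (n + m)); lia.
Qed.

Lemma bd_pre a n m N : forall i, (i <= n)%nat -> beta_digits a n m N i = a i.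
Proof.
  intros i H. unfold beta_digits. destruct (Nat.leb_spec i n). auto. lia.
Qed.

Lemma bd_top a n m N : (1 <= m)%nat -> beta_digits a n m N (n + m) = N.
Proof.
  intros H. unfold beta_digits. destruct (Nat.leb_spec (n + m) n). lia.
  rewrite Nat.eqb_refl. auto.
Qed.

Lemma bd_same a n m N N' : forall i, i <> (n + m)%nat -> beta_digits a n m N i = beta_digits a n m N' i.
Proof.
  intros i H. unfold beta_digits. destruct (Nat.leb_spec i n). auto.
  destruct (Nat.eqb_spec i (n + m)); lia.
Qed.

Theorem mainTheorem9 (n : nat) (a : nat -> nat)
  (ha : forall i, (i <= n)%nat -> (1 <= a i)%nat) :
  forall eps : R, 0 < eps ->
  exists m0 : nat, (0 < m0)%nat /\
    forall m N : nat, (m0 <= m)%nat -> (1 <= N)%nat ->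
      Phi (beta_digits a n m (N + 1)) - Phi (beta_digits a n m N) < eps.
Proof.
  intros eps Heps.
  destruct (max_bound a n) as [An [HA1 HA2]].
  set (Ar := INR An).
  assert (HAr : 1 <= Ar) by (unfold Ar; apply (le_INR 1); auto).
  set (K := (16 + 4 * Rabs Cg) * (1 + (INR n + 1) * (INR n + 2) * (Ar + 1))).
  assert (HK : 0 < K).
  { unfold K. pose proof (Rabs_pos Cg). pose proof (pos_INR n).
    apply Rmult_lt_0_compat. lra. assert (0 <= (INR n + 1) * (INR n + 2) * (Ar + 1)).
    apply Rmult_le_pos; [nra|lra]. lra. }
  destruct (pow_lt_1_zero (2/3) ltac:(rewrite Rabs_right; lra) (eps / K) ltac:(apply Rdiv_lt_0_compat; lra)) as [k0 Hk0].
  exists (k0 + 2)%nat. split. lia.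
  intros m N Hm HN.
  set (d := beta_digits a n m N). set (e := beta_digits a n m (N + 1)).
  assert (Hd1 := bd_ge1 a n m N ha HN). assert (He1 := bd_ge1 a n m (N + 1) ha ltac:(lia)).
  assert (Hdt := bd_tail a n m N). assert (Het := bd_tail a n m (N + 1)).
  fold d in Hd1, Hdt. fold e in He1, Het.
  pose proof (gold_bounds) as Hg.
  assert (Hmain := main_bound n m (INR N) gold Cg Ar (fun j => INR (d j)) (alpha d) (alpha e)
     (fun j => Phi (fun i => d (i + j)%nat)) (fun j => Phi (fun i => e (i + j)%nat))).
  assert (Hm1 : (1 <= m)%nat) by lia.
  assert (Hdx := alpha_facts d (n + m) Hd1 Hdt).
  assert (Hex := alpha_facts e (n + m) He1 Het).
  assert (Hde : forall j, (j < n + m)%nat -> d j = e j).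
  { intros j Hj. apply bd_same. lia. }
  specialize (Hmain ltac:(lia) ltac:(apply (le_INR 1); auto) Hg HAr).
  specialize (Hmain ltac:(intros j Hj; apply (le_INR 1); auto)).
  specialize (Hmain ltac:(intros j Hj; simpl; unfold d; rewrite bd_pre by auto; apply le_INR; auto)).
  specialize (Hmain ltac:(intros j H1 H2; simpl; unfold d; rewrite bd_ones by auto; reflexivity)).
  specialize (Hmain ltac:(intros j Hj; apply (alpha_rec d (n + m) Hd1 Hdt))).
  specialize (Hmain ltac:(intros j Hj; simpl; rewrite (Hde j Hj); apply (alpha_rec e (n + m) He1 Het))).
  specialize (Hmain ltac:(rewrite (alpha_rec d (n + m) Hd1 Hdt); unfold d; rewrite bd_top by auto;
     rewrite (alpha_tail _ (n + m) Hdt) by lia; reflexivity)).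
  specialize (Hmain ltac:(rewrite (alpha_rec e (n + m) He1 Het); unfold e; rewrite bd_top by auto;
     rewrite (alpha_tail _ (n + m) Het) by lia; rewrite plus_INR; simpl; f_equal; ring)).
  specialize (Hmain ltac:(intros j; apply Hdx) ltac:(intros j; apply Hex)).
  specialize (Hmain (Phi_shift_rec d (n + m) Hdt) (Phi_shift_rec e (n + m) Het)).
  specialize (Hmain (Phi_shift_tail d (n + m) Hdt (S (n + m)) ltac:(lia)) (Phi_shift_tail e (n + m) Het (S (n + m)) ltac:(lia))).
  simpl in Hmain.
  rewrite (Phi_ext d (fun i => d (i + 0)%nat)) by (intros; f_equal; lia).
  rewrite (Phi_ext e (fun i => e (i + 0)%nat)) by (intros; f_equal; lia).
  specialize (Hk0 (m - 2)%nat ltac:(lia)).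
  rewrite Rabs_right in Hk0 by (apply Rle_ge, pow_le; lra).
  fold K in Hmain.
  assert ((2/3) ^ (m - 2) * K < eps).
  { apply (Rmult_lt_compat_r K) in Hk0; auto. unfold Rdiv in Hk0. rewrite Rmult_assoc, Rinv_l, Rmult_1_r in Hk0; lra. }
  pose proof (RRle_abs (Phi (fun i => e (i + 0)%nat) - Phi (fun i => d (i + 0)%nat))). lra.
Qed.
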